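(* Let $n\in\mathbb{N}\cup\{0\}$, $A_1,\dots,A_n\in\mathscr{Q}$ and $\mathcal{A}=\{A_1,\dots,A_n\}$. An option set $S\in\mathscr{Q}$ belongs to $\mathrm{Ex}(\mathcal{A})$ if and only if either $S\cap\mathscr{V}_{>0}\neq\emptyset$, or $n\neq0$ and for every $\mathbf{u}\in\times_{j=1}^nA_j$ there exist some $s\in S\cup\{0\}$ and some $\boldsymbol\lambda\in\mathbb{R}^{n,+}$ with $\boldsymbol\lambda\mathbf{u}\le s$.
   Context: Let $\mathcal{X}$ be a nonempty set and let $\mathscr{V}$ be the real vector space of all functions $u:\mathcal{X}\to\mathbb{R}$ (options), with pointwise operations. For $u,v\in\mathscr{V}$, $u\le v$ iff $u(x)\le v(x)$ for all $x\in\mathcal{X}$, and $u<v$ iff $u\le v$ and $u\neq v$. Let $\mathscr{V}_{>0}=\{u\in\mathscr{V}:0<u\}$ and $\mathscr{V}^s_{>0}=\{\{u\}:u\in\mathscr{V}_{>0}\}$. Let $\mathscr{Q}$ be the set of all finite subsets of $\mathscr{V}$ (including $\emptyset$). For a positive integer $n$, $\mathbb{R}^{n,+}=\{\boldsymbol\lambda\in\mathbb{R}^n:\lambda_j\ge0\ \forall j,\ \sum_j\lambda_j>0\}$, and for $\boldsymbol\lambda\in\mathbb{R}^n$, $\mathbf u=(u_1,\dots,u_n)\in\mathscr{V}^n$, $\boldsymbol\lambda\mathbf u=\sum_{j=1}^n\lambda_ju_j$. A set of desirable option sets is any $K\subseteq\mathscr{Q}$. It is coherent if for all $A,B\in K$: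 (K0) $A\setminus\{0\}\in K$; (K1) $\{0\}\notin K$; (K2) $\mathscr{V}^s_{>0}\subseteq K$; (K3) $\{\boldsymbol\lambda(\mathbf u)\mathbf u:\mathbf u\in A\times B\}\in K$ for every map $\boldsymbol\lambda:A\times B\to\mathbb{R}^{2,+}$; (K4) $A\cup Q\in K$ for all $Q\in\mathscr{Q}$. $\bar{\mathbf K}$ denotes the set of coherent sets of desirable option sets. An assessment is any subset $\mathcal{A}\subseteq\mathscr{Q}$. Let $\bar{\mathbf K}(\mathcal A)=\{K\in\bar{\mathbf K}:\mathcal A\subseteq K\}$ and $\mathrm{Ex}(\mathcal A)=\bigcap\bar{\mathbf K}(\mathcal A)$, with the convention $\bigcap\emptyset=\mathscr{Q}$. *)

(* Defs.v *)
From HB Require Import structures.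
From mathcomp Require Import all_boot all_order all_algebra.
From mathcomp Require Import boolp classical_sets functions cardinality reals.
Set Implicit Arguments. Unset Strict Implicit. Unset Printing Implicit Defensive.
Import Order.TTheory GRing.Theory Num.Theory.
Local Open Scope classical_set_scope.
Local Open Scope ring_scope.

Section Defs.
Variables (X : Type) (R : realType).

Definition opt0 : X -> R := fun _ => 0.
Definition opt_le (u v : X -> R) : Prop := forall x, u x <= v x.
Definition opt_lt (u v : X -> R) : Prop := opt_le u v /\ u <> v.
Definition Vpos : set (X -> R) := [set u | opt_lt opt0 u].
Definition Qset : set (set (X -> R)) := [set A | finite_set A].

Definition R2plus (p : R * R) : Prop := 0 <= p.1 /\ 0 <= p.2 /\ 0 < p.1 + p.2.
Definition Rnplus (n : nat) (lam : 'I_n -> R) : Prop :=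
  (forall j, 0 <= lam j) /\ 0 < \sum_(j < n) lam j.
Definition lincomb (n : nat) (lam : 'I_n -> R) (u : 'I_n -> X -> R) : X -> R :=
  fun x => \sum_(j < n) lam j * u j x.

(* coherent sets of desirable option sets; a map lambda : A x B -> R^{2,+}
   is represented by a total function constrained on A x B. *)
Definition coherent (K : set (set (X -> R))) : Prop :=
  K `<=` Qset /\
  (* K0 *) (forall A, K A -> K (A `\ opt0)) /\
  (* K1 *) ~ K [set opt0] /\
  (* K2 *) (forall u, Vpos u -> K [set u]) /\
  (* K3 *) (forall A B, K A -> K B ->
     forall lam : (X -> R) -> (X -> R) -> R * R,
       (forall u v, A u -> B v -> R2plus (lam u v)) ->
       K [set w | exists u v, A u /\ B v /\
                  w = (fun x => (lam u v).1 * u x + (lam u v).2 * v x)]) /\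
  (* K4 *) (forall A Q, K A -> Qset Q -> K (A `|` Q)).

(* Ex(AA) = intersection of all coherent K containing AA, with the
   convention that the empty intersection is Q. *)
Definition Ex (AA : set (set (X -> R))) : set (set (X -> R)) :=
  [set S | Qset S /\ forall K, coherent K -> AA `<=` K -> K S].

End Defs.

(* Main.v *)
Require Import Defs.
From HB Require Import structures.
From mathcomp Require Import all_boot all_order all_algebra.
From mathcomp Require Import boolp classical_sets functions cardinality reals.
From mathcomp Require Import lra.
Import Order.TTheory GRing.Theory Num.Theory.
Local Open Scope classical_set_scope.
Local Open Scope ring_scope.

Lemma process (X : Type) (R : realType) (K : set (set (X -> R))) (I P : set (X -> R)) :
  P `<=` I ->
  (forall W v, K W -> W `<=` I -> W v -> ~ P v ->
     exists W', K W' /\ W' `<=` (W `\ v) `|` P) ->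
  forall W, K W -> finite_set W -> W `<=` I -> exists T, K T /\ T `<=` P.
Proof.
move=> PI step W KW /finite_seqP[s Ws].
suff H : forall (l : seq (X -> R)) (W : set (X -> R)), K W -> W `<=` I ->
   (forall w, W w -> ~ P w -> w \in l) -> exists T, K T /\ T `<=` P.
  by move=> WI; apply: (H s W) => // w; rewrite Ws => ws _; exact: ws.
clear Ws KW; elim=> [|a l IH] {}W KW WI Wl.
  exists W; split=> // w Ww; apply: contrapT => nP; by have := Wl w Ww nP.
have [[Wa nPa]|Hn] := pselect (W a /\ ~ P a).
  have [W' [KW' W'sub]] := step W a KW WI Wa nPa.
  apply: (IH W') => //.
    by move=> w /W'sub [[Ww _]|Pw]; [exact: WI| exact: PI].
  move=> w /W'sub [[Ww wa]|Pw] nPw; last by [].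
  have := Wl w Ww nPw; rewrite inE => /orP[/eqP wa'|//].
  by exfalso; apply: wa.
apply: (IH W) => // w Ww nPw; have := Wl w Ww nPw.
rewrite inE => /orP[/eqP wa|//]; exfalso; apply: Hn; by rewrite -wa.
Qed.

Lemma subst_step (X : Type) (R : realType) (K : set (set (X -> R)))
  (coh : coherent K) (W B : set (X -> R)) (v : X -> R) (f : (X -> R) -> R * R) :
  K W -> K B -> (forall b, B b -> R2plus (f b)) ->
  exists W', K W' /\ W' `<=` (W `\ v) `|`
    [set w | exists b, B b /\ w = (fun x => (f b).1 * v x + (f b).2 * b x)].
Proof.
case: coh => _ [_ [_ [_ [K3 _]]]] KW KB fR.
pose lam := fun a b : X -> R => if a == v then f b else ((1 : R), (0 : R)).
eexists; split; first apply: (K3 W B KW KB lam).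
  move=> a b Wa Bb; rewrite /lam; case: eqP => _; first exact: fR.
  rewrite /R2plus /=; split; [|split]; lra.
move=> w [a [b [Wa [Bb ->]]]]; rewrite /lam; case: eqP => [->|av].
  by right; exists b.
left; have -> : (fun x => ((1:R), (0:R)).1 * a x + ((1:R), (0:R)).2 * b x) = a.
  by apply: funext => x /=; rewrite mul1r mul0r addr0.
by split.
Qed.

Lemma domination (X : Type) (R : realType) (K : set (set (X -> R)))
  (coh : coherent K) (S' T : set (X -> R)) :
  Qset S' -> K T -> T `<=` [set t | exists s, S' s /\ opt_le t s] -> K S'.
Proof.
move=> QS KT TS; have coh' := coh; case: coh => KQ [_ [_ [K2 [_ K4]]]].
have [T' [KT' T'S]] : exists T', K T' /\ T' `<=` S'.
  apply: (@process _ _ K [set t | exists s, S' s /\ opt_le t s] S' _ _ T KT (KQ _ KT) TS).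
    by move=> s Ss; exists s; split => // x; exact: lexx.
  move=> W v KW WI Wv nSv; have [s [Ss vs]] := WI v Wv.
  pose d := fun x => s x - v x.
  have Kd : K [set d].
    apply: K2; split; first by move=> x; rewrite /opt0 subr_ge0; exact: vs.
    move=> d0; apply: nSv; suff -> : v = s by [].
    apply: funext => x; have := congr1 (fun f => f x) d0.
    rewrite /opt0 /d => /eqP; rewrite eq_sym subr_eq0 => /eqP ->; done.
  have [W' [KW' W'sub]] := @subst_step _ _ K coh' W [set d] v (fun _ => (1, 1)) KW Kd
     (fun b _ => ltac:(rewrite /R2plus /=; split; [|split]; lra)).
  exists W'; split => // w /W'sub [?|[b [-> ->]]]; first by left.
  right; have -> : (fun x => ((1:R), (1:R)).1 * v x + ((1:R), (1:R)).2 * d x) = s.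
    by apply: funext => x /=; rewrite /d !mul1r addrC subrK.
  done.
by rewrite -(setUidr T'S); apply: K4.
Qed.
Lemma claim (X : Type) (R : realType) (K : set (set (X -> R))) (coh : coherent K) :
  forall m (B : nat -> set (X -> R)) (P : set (X -> R)),
  (forall i, (i < m)%N -> K (B i)) ->
  (forall u : nat -> X -> R, (forall i, (i < m)%N -> B i (u i)) ->
     exists lam : nat -> R, (forall i, 0 <= lam i) /\ 0 < \sum_(i < m) lam i /\
       P (fun x => \sum_(i < m) lam i * u i x)) ->
  exists T, K T /\ T `<=` P.
Proof.
have coh' := coh; case: coh => KQ _.
elim=> [|m IH] B P KB HP.
  have [lam [_ [h _]]] := HP (fun _ _ => 0) (fun i => ltac:(by [])).
  by move: h; rewrite big_ord0 ltxx.
have PI : P `<=` B m `|` P by move=> t Pt; right.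
have BI : B m `<=` B m `|` P by move=> t Bt; left.
apply: (@process _ _ K (B m `|` P) P PI _ (B m) (KB m (ltnSn m)) (KQ _ (KB m (ltnSn m))) BI).
move=> W v KW WI Wv nPv.
have Bv : B m v by case: (WI v Wv).
have [[c [c0 Pc]]|Hc] := pselect (exists c, 0 < c /\ P (fun x => c * v x)).
  have [W' [KW' sub]] := @subst_step _ _ K coh' W W v (fun _ => (c, 0)) KW KW
    (fun b _ => ltac:(rewrite /R2plus /=; split; [|split]; lra)).
  exists W'; split=> // w /sub [?|[b [_ ->]]]; [by left|right].
  rewrite (_ : (fun x => _) = (fun x => c * v x)) //; apply: funext=> x /=.
  by rewrite mul0r addr0.
pose Pv := [set t | exists c, 0 <= c /\ P (fun x => c * v x + 1 * t x)].
have [Tv [KTv TvP]] : exists T, K T /\ T `<=` Pv.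
  apply: (IH B Pv (fun i hi => KB i (leqW hi))) => u' Bu'.
  pose u := fun i => if i == m then v else u' i.
  have Bu : forall i, (i < m.+1)%N -> B i (u i).
    move=> i; rewrite ltnS leq_eqVlt => /orP[/eqP ->|im]; rewrite /u ?eqxx //.
    by rewrite (ltn_eqF im); apply: Bu'.
  have [lam [l0 [lpos Pl]]] := HP u Bu.
  have E : (fun x => \sum_(i < m.+1) lam i * u i x) =
           (fun x => lam m * v x + 1 * \sum_(i < m) lam i * u' i x).
    apply: funext => x; rewrite big_ord_recr /= /u eqxx mul1r addrC; congr (_ + _).
    by apply: eq_bigr => i _; rewrite (ltn_eqF (ltn_ord i)).
  have s0 : 0 <= \sum_(i < m) lam i by apply: sumr_ge0 => i _.
  have Es : \sum_(i < m.+1) lam i = \sum_(i < m) lam i + lam m by rewrite big_ord_recr.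
  move: s0; rewrite le0r => /orP[/eqP s0|spos].
    exfalso; apply: Hc; exists (lam m); split; first by rewrite Es s0 add0r in lpos.
    have Z := psumr_eq0P (fun (i : 'I_m) _ => l0 i) s0.
    move: Pl; rewrite E; congr P; apply: funext => x.
    by rewrite big1 ?mulr0 ?addr0 // => i _; rewrite Z ?mul0r.
  exists lam; split=> //; split=> //; exists (lam m); split => //.
  by rewrite -E.
have [cf Hcf] : {cf : (X -> R) -> R & forall t, Tv t -> 0 <= cf t /\ P (fun x => cf t * v x + 1 * t x)}.
  apply: (@choice _ _ (fun t c => Tv t -> 0 <= c /\ P (fun x => c * v x + 1 * t x))) => t; have [Tt|nT] := pselect (Tv t); last by exists 0.
  by have [c hc] := TvP t Tt; exists c.
have fR : forall b, Tv b -> R2plus ((fun t => (cf t, (1:R))) b).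
  move=> b Bb; have [h _] := Hcf b Bb; rewrite /R2plus /=; split; [|split]; lra.
have [W' [KW' sub]] := @subst_step _ _ K coh' W Tv v (fun t => (cf t, 1)) KW KTv fR.
exists W'; split=> // w /sub [?|[b [Tb ->]]]; [by left|right].
exact: (Hcf b Tb).2.
Qed.
Definition good (X : Type) (R : realType) n (A : 'I_n -> set (X -> R))
  (S' : set (X -> R)) : Prop :=
  (S' `&` @Vpos X R) !=set0 \/
   (n <> 0%N /\
    forall u : 'I_n -> X -> R, (forall j, A j (u j)) ->
      exists s, (S' `|` [set @opt0 X R]) s /\
      exists lam : 'I_n -> R, Rnplus lam /\ opt_le (lincomb lam u) s).
Arguments good {X R n}.

Lemma Vpos_wit (X : Type) (R : realType) (p : X -> R) :
  Vpos p -> exists x, 0 < p x.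
Proof.
move=> [p0 np]; apply: contrapT => H; apply: np; apply: funext => x.
have := p0 x; rewrite /opt0 le0r => /orP[/eqP ->//|px]; exfalso; apply: H; by exists x.
Qed.

Arguments Vpos_wit {X R p}.

Lemma Vpos_of (X : Type) (R : realType) (w : X -> R) x0 :
  (forall x, 0 <= w x) -> 0 < w x0 -> Vpos w.
Proof.
move=> w0 wx; split=> // e; move: wx; rewrite -e /opt0 ltxx.
by [].
Qed.

Arguments Vpos_of {X R w}.

Lemma lincomb_comb (X : Type) (R : realType) n (m1 m2 : 'I_n -> R) (u : 'I_n -> X -> R) a b x :
  lincomb (fun j => a * m1 j + b * m2 j) u x = a * lincomb m1 u x + b * lincomb m2 u x.
Proof.
rewrite /lincomb !mulr_sumr -big_split /=; apply: eq_bigr => j _.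
by rewrite mulrDl !mulrA.
Qed.

Lemma sum_comb (R : realType) n (m1 m2 : 'I_n -> R) a b :
  \sum_(j < n) (a * m1 j + b * m2 j) = a * \sum_(j < n) m1 j + b * \sum_(j < n) m2 j.
Proof. by rewrite !mulr_sumr -big_split. Qed.

Lemma good_mono (X : Type) (R : realType) n (A : 'I_n -> set (X -> R)) (S1 S2 : set (X -> R)) :
  S1 `<=` S2 -> good A S1 -> good A S2.
Proof.
move=> sub [[w [S1w Pw]]|[n0 H]]; first by left; exists w; split=> //; apply: sub.
right; split=> // u Au; have [s [Ss rest]] := H u Au; exists s; split=> //.
by case: Ss => [/sub|]; [left|right].
Qed.

Lemma mixed (X : Type) (R : realType) n (A : 'I_n -> set (X -> R)) (C D : set (X -> R))
  (p : X -> R) (g : (X -> R) -> R * R) :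
  Vpos p -> good A D -> ~ ((D `&` @Vpos X R) !=set0) -> (forall d, D d -> R2plus (g d)) ->
  (forall d, D d -> C (fun x => (g d).1 * p x + (g d).2 * d x)) -> good A C.
Proof.
move=> Pp [//|[n0 HD]] _ gR DC.
have [x0 px0] := Vpos_wit Pp.
have p0 : forall x, 0 <= p x by case: Pp.
have [[d [Dd g0]]|Hg] := pselect (exists d, D d /\ (g d).2 = 0).
  left; exists (fun x => (g d).1 * p x + (g d).2 * d x); split; first exact: DC.
  have [h1 [h2 h3]] := gR d Dd.
  apply: (Vpos_of x0) => [x|]; rewrite g0 mul0r addr0.
    by apply: mulr_ge0.
  by apply: mulr_gt0 => //; rewrite g0 addr0 in h3.
right; split=> // u Au; have [s [[Ds|s0] [mu [[m0 mpos] le]]]] := HD u Au; last first.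
  by exists s; split; [right|exists mu].
have [h1 [h2 h3]] := gR s Ds.
have g2 : 0 < (g s).2 by rewrite lt0r h2 andbT; apply/eqP => e; apply: Hg; exists s.
exists (fun x => (g s).1 * p x + (g s).2 * s x); split; first by left; apply: DC.
exists (fun j => (g s).2 * mu j + 0 * mu j); split.
  split; first by move=> j; rewrite mul0r addr0; apply: mulr_ge0.
  by rewrite sum_comb mul0r addr0; apply: mulr_gt0.
move=> x; rewrite lincomb_comb mul0r addr0.
have := le x; have := p0 x; have := mulr_ge0 h1 (p0 x).
move=> hh _ hle; rewrite addrC -[X in X <= _]addr0 lerD //.
by apply: ler_wpM2l.
Qed.
Lemma good_K3 (X : Type) (R : realType) n (A : 'I_n -> set (X -> R)) (A' B' : set (X -> R))
  (lam : (X -> R) -> (X -> R) -> R * R) :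
  good A A' -> good A B' -> (forall u v, A' u -> B' v -> R2plus (lam u v)) ->
  good A [set w | exists u v, A' u /\ B' v /\
                  w = (fun x => (lam u v).1 * u x + (lam u v).2 * v x)].
Proof.
move=> gA gB lR.
have [[p [Ap Pp]]|nA] := pselect ((A' `&` @Vpos X R) !=set0);
have [[q [Bq Pq]]|nB] := pselect ((B' `&` @Vpos X R) !=set0).
- left; exists (fun x => (lam p q).1 * p x + (lam p q).2 * q x); split.
    by exists p, q.
  have [x0 px0] := Vpos_wit Pp; have [x1 qx1] := Vpos_wit Pq.
  have p0 : forall x, 0 <= p x by case: Pp.
  have q0 : forall x, 0 <= q x by case: Pq.
  have [h1 [h2 h3]] := lR p q Ap Bq.
  have nn : forall x, 0 <= (lam p q).1 * p x + (lam p q).2 * q x.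
    by move=> x; apply: addr_ge0; apply: mulr_ge0.
  move: h1; rewrite le0r => /orP[/eqP a0|apos].
    apply: (Vpos_of x1) => //; rewrite a0 mul0r add0r; apply: mulr_gt0 => //.
    by rewrite a0 add0r in h3.
  apply: (Vpos_of x0) => //; apply: ltr_pwDl; last by apply: mulr_ge0.
  exact: mulr_gt0.
- apply: (@mixed _ _ _ _ _ B' p (lam p)) => //.
    by move=> d Bd; apply: lR.
  by move=> d Bd; exists p, d.
- apply: (@mixed _ _ _ _ _ A' q (fun d => ((lam d q).2, (lam d q).1))) => //.
    by move=> d Ad /=; have [h1 [h2 h3]] := lR d q Ad Bq; split=> //; split=> //; rewrite addrC.
  move=> d Ad; exists d, q; split=> //; split=> //=; apply: funext => x; exact: addrC.
case: gA => [//|[n0 HA]]; case: gB => [//|[_ HB]].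
right; split=> // u Au.
have [s [[As|s0] [m1 [[m10 m1pos] le1]]]] := HA u Au; last first.
  by exists s; split; [right|exists m1].
have [t [[Bt|t0] [m2 [[m20 m2pos] le2]]]] := HB u Au; last first.
  by exists t; split; [right|exists m2].
have [h1 [h2 h3]] := lR s t As Bt.
exists (fun x => (lam s t).1 * s x + (lam s t).2 * t x); split.
  by left; exists s, t.
exists (fun j => (lam s t).1 * m1 j + (lam s t).2 * m2 j); split.
  split; first by move=> j; apply: addr_ge0; apply: mulr_ge0.
  rewrite sum_comb.
  move: h1; rewrite le0r => /orP[/eqP a0|apos].
    by rewrite a0 mul0r add0r; apply: mulr_gt0 => //; rewrite a0 add0r in h3.
  by apply: ltr_pwDl; [apply: mulr_gt0|apply: mulr_ge0 => //; apply: ltW].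
move=> x; rewrite lincomb_comb; apply: lerD; apply: ler_wpM2l => //.
Qed.
Theorem theorem5 (X : Type) (R : realType) (hX : inhabited X) (n : nat)
  (A : 'I_n -> set (X -> R)) (hA : forall j, Qset (A j))
  (S : set (X -> R)) (hS : Qset S) :
  Ex (range A) S <->
  ((S `&` @Vpos X R) !=set0 \/
   (n <> 0%N /\
    forall u : 'I_n -> X -> R, (forall j, A j (u j)) ->
      exists s, (S `|` [set @opt0 X R]) s /\
      exists lam : 'I_n -> R, Rnplus lam /\ opt_le (lincomb lam u) s)).
Proof.
have nV0 : ~ @Vpos X R (@opt0 X R) by case.
split.
  move=> [_ HK]; change (good A S).
  pose Kst := [set S' : set (X -> R) | Qset S' /\ good A S'].
  have [[_ [[w [w0 Pw]]|[n0 H0]]]|K0n] := pselect (Kst [set @opt0 X R]).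
  - by exfalso; apply: nV0; rewrite -w0.
  - right; split=> // u Au; have [s [s0 [lam [hl le]]]] := H0 u Au.
    have e : s = @opt0 X R by case: s0.
    by exists s; split; [right|exists lam].
  suff [] : Kst S by [].
  apply: HK; last first.
    move=> _ [j _ <-]; split; first exact: hA.
    right; split; first by move=> n0; have := ltn_ord j; move: (nat_of_ord j) => k; rewrite n0.
    move=> u Au; exists (u j); split; first by left.
    exists (fun i => if i == j then 1 else 0); split.
      split; first by move=> i; case: eqP.
      by rewrite (bigD1 j) //= eqxx big1 ?addr0 // => i /negPf ->.
    move=> x; rewrite /lincomb (bigD1 j) //= eqxx mul1r big1 ?addr0 // => i /negPf ->.
    by rewrite mul0r.
  split; first by move=> S' [].
  split.
    move=> A' [QA gA]; split; first exact: finite_setD.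
    case: gA => [[w [Aw Pw]]|[n0 H]].
      left; exists w; split => //; split => // e; apply: nV0; by rewrite -e.
    right; split => // u Au; have [s [Ss rest]] := H u Au; exists s; split => //.
    have [->|ne] := pselect (s = @opt0 X R); first by right.
    by case: Ss => // ?; left.
  split; first exact: K0n.
  split.
    move=> u Pu; split; first exact: finite_set1.
    by left; exists u.
  split.
    move=> A' B' [QA gA] [QB gB] lam lR; split; last exact: good_K3.
    apply: (@sub_finite_set _ _ ((fun p => (fun x => (lam p.1 p.2).1 * p.1 x + (lam p.1 p.2).2 * p.2 x)) @` (A' `*` B'))).
      by move=> w [u [v [Au [Bv ->]]]]; exists (u, v).
    by apply: finite_image; apply: finite_setX.
  move=> A' Q [QA gA] QQ; split; first by rewrite /Qset /= finite_setU.
  by apply: good_mono gA; left.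
move=> H; split => // K coh RA.
have coh' := coh; case: coh => KQ [K0 [_ [K2 [_ K4]]]].
case: H => [[u [Su Pu]]|[n0 H]].
  rewrite -(setUidr (_ : [set u] `<=` S)); last by move=> _ ->.
  by apply: K4 => //; apply: K2.
move: A hA RA H; case: n n0 => [//|n'] _ A hA RA H.
pose B := fun i : nat => A (inord i).
pose P := [set t | exists s, (S `|` [set @opt0 X R]) s /\ opt_le t s].
have [T [KT TP]] : exists T, K T /\ T `<=` P.
  apply: (@claim _ _ K coh' n'.+1 B P).
    by move=> i hi; apply: RA; exists (inord i).
  move=> u Bu; pose uo := fun j : 'I_n'.+1 => u j.
  have Ao : forall j, A j (uo j).
    by move=> j; have := Bu j (ltn_ord j); rewrite /B inord_val.
  have [s [Ss [lam [[l0 lpos] le]]]] := H uo Ao.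
  have E : forall j : 'I_n'.+1, lam (inord j) = lam j by move=> j; rewrite inord_val.
  exists (fun i => lam (inord i)); split; first by move=> i.
  split; first by rewrite (eq_bigr (fun j : 'I_n'.+1 => lam j)) // => j _; rewrite E.
  exists s; split => // x.
  rewrite (eq_bigr (fun j : 'I_n'.+1 => lam j * uo j x)); first exact: le x.
  by move=> j _; rewrite E.
have KS0 : K (S `|` [set @opt0 X R]).
  apply: (@domination _ _ K coh' _ T _ KT TP).
  by rewrite /Qset /= finite_setU; split => //; exact: finite_set1.
have := K4 _ S (K0 _ KS0) hS; rewrite setUidr //.
by move=> x [[Sx|x0] nx].
Qed.
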